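(* Fix a replacement rule $\{p_{(R,\alpha)}(\mathbf{x})\}_{(R,\alpha)}$ satisfying the Fixation Axiom and a mutational bias $\nu\in(0,1)$. Then for each state $\mathbf{x}\in\{0,1\}^G$, $\lim_{u\to0}\pi_{\mathrm{MSS}}(\mathbf{x})$ exists and $$\lim_{u\to0}\pi_{\mathrm{MSS}}(\mathbf{x})=\begin{cases}\dfrac{\nu b(\mathbf{a})\rho_A}{\nu b(\mathbf{a})\rho_A+(1-\nu)b(\mathbf{A})\rho_a} & \mathbf{x}=\mathbf{A},\\[3mm] \dfrac{(1-\nu)b(\mathbf{A})\rho_a}{\nu b(\mathbf{a})\rho_A+(1-\nu)b(\mathbf{A})\rho_a} & \mathbf{x}=\mathbf{a},\\[3mm] 0 & \mathbf{x}\notin\{\mathbf{a},\mathbf{A}\},\end{cases}$$ where $\rho_A,\rho_a$ are the fixation probabilities for this replacement rule at $u=0$.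
   Context: Setting. $G$ is a finite nonempty set of genetic sites, $n=|G|$. A state is $\mathbf{x}\in\{0,1\}^G$ ($x_g=1$: allele $A$ at site $g$; $0$: allele $a$). For $S\subseteq G$, $\mathbf{1}_S$ has $x_g=1$ iff $g\in S$; $\mathbf{a}=\mathbf{1}_\emptyset$, $\mathbf{A}=\mathbf{1}_G$. A replacement event is $(R,\alpha)$ with $R\subseteq G$, $\alpha:R\to G$; a replacement rule gives for each state a probability distribution $\{p_{(R,\alpha)}(\mathbf{x})\}$ over events. With mutation probability $u\in[0,1]$ and bias $\nu\in(0,1)$, the evolutionary Markov chain moves from $\mathbf{x}$: draw $(R,\alpha)$ with probability $p_{(R,\alpha)}(\mathbf{x})$; independently for $g\in R$, $x'_g=x_{\alpha(g)}$ w.p. $1-u$, $x'_g=1$ w.p. $u\nu$, $x'_g=0$ w.p. $u(1-\nu)$; $x'_g=x_g$ for $g\notin R$. $P^{(t)}_{\mathbf{x}\to\mathbf{y}}$ denotes $t$-step transition probabilities. Fixation Axiom: there exist $g\in G$, $m\ge1$, events $(R_k,\alpha_k)_{k=1}^m$ with $p_{(R_k,\alpha_k)}(\mathbf{x})>0$ for all $k,\mathbf{x}$, $g\in R_k$ for some $k$, and $\tilde\alpha_1\circ\cdots\circ\tilde\alpha_m(h)=g$ for all $h\in G$, where $\tilde\alpha_k$ equals $\alpha_k$ on $R_k$ and the identity elsewhere. Quantities: $e_{gh}(\mathbf{x})=\sum_{(R,\alpha):h\in R,\alpha(h)=g}p_{(R,\alpha)}(\mathbf{x})$, $b_g=\sum_h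 e_{gh}$, $d_g=\sum_h e_{hg}$, $b=\sum_gb_g$. At $u=0$, $\mathbf{a},\mathbf{A}$ are absorbing and absorption occurs a.s. Mutant appearance distributions: $\mu_A(\mathbf{1}_{\{g\}})=d_g(\mathbf{a})/b(\mathbf{a})$ (zero on other states), $\mu_a(\mathbf{1}_{G\setminus\{g\}})=d_g(\mathbf{A})/b(\mathbf{A})$ (zero elsewhere); $\rho_A=\sum_\mathbf{x}\mu_A(\mathbf{x})\lim_{t\to\infty}P^{(t)}_{\mathbf{x}\to\mathbf{A}}$, $\rho_a=\sum_\mathbf{x}\mu_a(\mathbf{x})\lim_{t\to\infty}P^{(t)}_{\mathbf{x}\to\mathbf{a}}$, both computed at $u=0$. For $u>0$ the chain has a unique stationary distribution $\pi_{\mathrm{MSS}}$ (mutation–selection stationary distribution). *)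

(* Defs.v *)
From HB Require Import structures.
From mathcomp Require Import all_boot all_order all_algebra.
From mathcomp Require Import all_classical all_reals all_analysis.
Set Implicit Arguments. Unset Strict Implicit. Unset Printing Implicit Defensive.
Import Order.TTheory GRing.Theory Num.Theory numFieldNormedType.Exports.
Local Open Scope ring_scope.

Section Evo.
Variables (G : finType) (R : realType).

(* A state x in {0,1}^G : x g = true means allele A at site g. *)
Definition state := {ffun G -> bool}.
Definition ind (S : {set G}) : state := [ffun g => g \in S].
Definition allA : state := [ffun _ => true].
Definition alla : state := [ffun _ => false].

(* A replacement event (R, alpha), R subset of G, alpha : R -> G, encoded
   bijectively as e : G -> option G with e g = Some (alpha g) if g \in R
   and e g = None if g \notin R. *)
Definition event := {ffun G -> option G}.
Definition ev_set (e : event) : {set G} := [set g | e g != None].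
Definition tilde (e : event) (h : G) : G := if e h is Some k then k else h.

Definition replacement_rule (p : state -> event -> R) :=
  forall x, (forall e, 0 <= p x e) /\ \sum_e p x e = 1.

Definition fixation_axiom (p : state -> event -> R) :=
  exists g : G, exists s : seq event,
    [/\ (0 < size s)%N,
        (forall e, e \in s -> forall x, 0 < p x e),
        (exists2 e, e \in s & g \in ev_set e) &
        forall h, foldr tilde h s = g].

Definition edge (p : state -> event -> R) (x : state) (g h : G) : R :=
  \sum_(e : event | e h == Some g) p x e.
Definition birth p x g := \sum_h edge p x g h.
Definition death p x g := \sum_h edge p x h g.
Definition btot p x := \sum_g birth p x g.

Definition site_prob (u nu : R) (e : event) (x : state) (g : G) (bv : bool) : R :=
  match e g with
  | None => (bv == x g)%:R
  | Some h => (1 - u) * (bv == x h)%:R + (if bv then u * nu else u * (1 - nu))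
  end.

Definition trans (p : state -> event -> R) (u nu : R) (x y : state) : R :=
  \sum_e p x e * \prod_g site_prob u nu e x g (y g).

Fixpoint trans_n p u nu (t : nat) (x y : state) : R :=
  match t with
  | 0 => (x == y)%:R
  | t'.+1 => \sum_z trans_n p u nu t' x z * trans p u nu z y
  end.

Definition absorb_prob p (x y : state) : R :=
  limn (fun t => trans_n p 0 0 t x y).
Definition rhoA p : R :=
  \sum_g (death p alla g / btot p alla) * absorb_prob p (ind [set g]) allA.
Definition rhoa p : R :=
  \sum_g (death p allA g / btot p allA) * absorb_prob p (ind [set~ g]) alla.

Definition stationary (P : state -> state -> R) (pi : state -> R) :=
  [/\ forall x, 0 <= pi x, \sum_x pi x = 1 & forall y, \sum_x pi x * P x y = pi y].

Definition limit_value p (nu : R) (x : state) : R :=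
  let D := nu * btot p alla * rhoA p + (1 - nu) * btot p allA * rhoa p in
  if x == allA then nu * btot p alla * rhoA p / D
  else if x == alla then (1 - nu) * btot p allA * rhoa p / D
  else 0.

End Evo.

(* Main.v *)
Require Import Defs.
From HB Require Import structures.
From mathcomp Require Import all_boot all_order all_algebra.
From mathcomp Require Import all_classical all_reals all_analysis.
From mathcomp Require Import ring lra.
Set Implicit Arguments. Unset Strict Implicit. Unset Printing Implicit Defensive.
Import Order.TTheory GRing.Theory Num.Theory numFieldNormedType.Exports.
Local Open Scope ring_scope.
Local Open Scope classical_set_scope.
Section Basic.
Variables (G : finType) (R : realType) (p : state G -> event G -> R).
Hypothesis Hp : replacement_rule p.

Definition apply_ev (e : event G) (x : state G) : state G := [ffun g => x (tilde e g)].

Lemma site_prob0 (nu : R) e x g bv : site_prob (0:R) nu e x g bv = (bv == apply_ev e x g)%:R.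
Proof.
rewrite /site_prob ffunE /tilde; case: (e g) => [h|] //.
by rewrite !mul0r subr0 mul1r; case: bv; rewrite addr0.
Qed.

Lemma prod_ind (y z : state G) : \prod_g ((y g == z g)%:R : R) = (y == z)%:R.
Proof.
case: eqP => [->|/eqP neq].
  by rewrite big1 // => g _; rewrite eqxx.
have [g Hg] : exists g, y g != z g.
  apply/existsP; apply: contraR neq => /existsPn H; apply/eqP/ffunP => g.
  by move: (H g); rewrite negbK => /eqP.
by rewrite (bigD1 g) //= (negbTE Hg) mul0r.
Qed.

Lemma trans0 nu x y : trans p 0 nu x y = \sum_e p x e * (y == apply_ev e x)%:R.
Proof.
apply: eq_bigr => e _; congr (_ * _).
rewrite -prod_ind; apply: eq_bigr => g _; by rewrite site_prob0 ffunE.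
Qed.

Lemma trans0_nu nu x y : trans p 0 nu x y = trans p 0 0 x y.
Proof. by rewrite !trans0. Qed.

Lemma trans_n0_nu nu t x y : trans_n p 0 nu t x y = trans_n p 0 0 t x y.
Proof.
elim: t y => [|t IH] y //=; apply: eq_bigr => z _; by rewrite IH trans0_nu.
Qed.

Lemma p_ge0 x e : 0 <= p x e.
Proof. by case: (Hp x) => H _; apply: H. Qed.

Lemma p_sum1 x : \sum_e p x e = 1.
Proof. by case: (Hp x). Qed.

Lemma p_le1 x e : p x e <= 1.
Proof.
rewrite -(p_sum1 x) (bigD1 e) //= lerDl; apply: sumr_ge0 => ? _; exact: p_ge0.
Qed.

Lemma site_prob_ge0 (u nu : R) (e : event G) x g bv : 0 <= u <= 1 -> 0 <= nu <= 1 ->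
  0 <= site_prob u nu e x g bv.
Proof.
move=> /andP[u0 u1] /andP[n0 n1]; rewrite /site_prob.
case: (e g) => [h|]; last by rewrite ler0n.
apply: addr_ge0; first by apply: mulr_ge0; rewrite ?subr_ge0 ?ler0n.
case: bv; apply: mulr_ge0 => //; by rewrite subr_ge0.
Qed.

Lemma trans_ge0 u nu x y : 0 <= u <= 1 -> 0 <= nu <= 1 -> 0 <= trans p u nu x y.
Proof.
move=> hu hn; apply: sumr_ge0 => e _; apply: mulr_ge0; first exact: p_ge0.
apply: prodr_ge0 => g _; exact: site_prob_ge0.
Qed.

Lemma trans_n_ge0 u nu t x y : 0 <= u <= 1 -> 0 <= nu <= 1 -> 0 <= trans_n p u nu t x y.
Proof.
move=> hu hn; elim: t y => [|t IH] y /=; first by rewrite ler0n.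
apply: sumr_ge0 => z _; apply: mulr_ge0 => //; exact: trans_ge0.
Qed.

Lemma trans_nD u nu t s x y :
  trans_n p u nu (t + s) x y = \sum_z trans_n p u nu t x z * trans_n p u nu s z y.
Proof.
elim: s y => [|s IH] y /=.
  rewrite addn0 (bigD1 y) //= eqxx mulr1 big1 ?addr0 // => z /negbTE ->.
  by rewrite mulr0.
rewrite addnS /=.
under eq_bigr do rewrite IH big_distrl /=.
rewrite exchange_big /=; apply: eq_bigr => z _.
by rewrite big_distrr /=; apply: eq_bigr => w _; rewrite mulrA.
Qed.

Lemma trans_n1 u nu x y : trans_n p u nu 1 x y = trans p u nu x y.
Proof.
rewrite /= (bigD1 x) //= eqxx mul1r big1 ?addr0 // => z /negbTE.
by rewrite eq_sym => ->; rewrite mul0r.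
Qed.

Lemma trans_nSl u nu t x y :
  trans_n p u nu t.+1 x y = \sum_z trans p u nu x z * trans_n p u nu t z y.
Proof.
rewrite -add1n trans_nD; apply: eq_bigr => z _; by rewrite trans_n1.
Qed.

Lemma sum_ind (a : state G) : \sum_y ((y == a)%:R : R) = 1.
Proof.
rewrite (bigD1 a) //= eqxx big1 ?addr0 // => y /negbTE -> //.
Qed.

Lemma trans0_sum x : \sum_y trans p 0 0 x y = 1.
Proof.
under eq_bigr do rewrite trans0.
rewrite exchange_big; rewrite -[RHS](p_sum1 x); apply: eq_bigr => e _.
rewrite -big_distrr sum_ind; exact: mulr1.
Qed.

Lemma trans_n0_sum t x : \sum_y trans_n p 0 0 t x y = 1.
Proof.
elim: t x => [|t IH] x /=; first by rewrite (eq_bigr (fun y => (y == x)%:R)) ?sum_ind // => y _; rewrite eq_sym.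
rewrite exchange_big -[RHS](IH x); apply: eq_bigr => z _.
rewrite -big_distrr trans0_sum; exact: mulr1.
Qed.

Lemma trans_n0_le1 t x y : trans_n p 0 0 t x y <= 1.
Proof.
rewrite -(trans_n0_sum t x) (bigD1 y) //= lerDl; apply: sumr_ge0 => z _.
apply: trans_n_ge0; by rewrite lexx ler01.
Qed.

Lemma apply_allA e : apply_ev e (allA G) = allA G.
Proof. by apply/ffunP => g; rewrite !ffunE. Qed.
Lemma apply_alla e : apply_ev e (alla G) = alla G.
Proof. by apply/ffunP => g; rewrite !ffunE. Qed.

Lemma trans0_abs (c : state G) : (forall e, apply_ev e c = c) ->
  forall y, trans p 0 0 c y = (y == c)%:R.
Proof.
move=> Hc y; rewrite trans0; under eq_bigr do rewrite Hc.
rewrite -big_distrl p_sum1; exact: mul1r.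
Qed.

Lemma trans_n0_abs (c : state G) : (forall e, apply_ev e c = c) ->
  forall t y, trans_n p 0 0 t c y = (y == c)%:R.
Proof.
move=> Hc; elim=> [|t IH] y /=; first by rewrite eq_sym.
rewrite (bigD1 c) //= IH eqxx mul1r big1 ?addr0; first exact: trans0_abs.
by move=> z /negbTE; rewrite IH => ->; rewrite mul0r.
Qed.

Lemma trans0_ge x e : p x e <= trans p 0 0 x (apply_ev e x).
Proof.
rewrite trans0 (bigD1 e) //= eqxx mulr1 lerDl; apply: sumr_ge0 => f _.
by apply: mulr_ge0; rewrite ?ler0n ?p_ge0.
Qed.

Definition run (s : seq (event G)) (x : state G) := foldl (fun x e => apply_ev e x) x s.

Lemma runE s x : run s x = [ffun h => x (foldr (@tilde G) h s)].
Proof.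
elim: s x => [|e s IH] x /=; first by apply/ffunP => h; rewrite ffunE.
rewrite /run /= -/(run s _) IH; apply/ffunP => h; by rewrite !ffunE.
Qed.

Lemma run_ge (s : seq (event G)) (d : R) : 0 <= d ->
  (forall x e, e \in s -> d <= p x e) ->
  forall x, d ^+ size s <= trans_n p 0 0 (size s) x (run s x).
Proof.
move=> d0; elim: s => [|e s IH] Hd x.
  by rewrite /= expr0 eqxx.
rewrite [size _]/= trans_nSl (bigD1 (apply_ev e x)) //= exprS.
have H1 : d <= trans p 0 0 x (apply_ev e x).
  apply: le_trans (trans0_ge x e); apply: Hd; exact: mem_head.
have H2 := IH (fun y f hf => Hd y f (@mem_behead _ (e :: s) f hf)) (apply_ev e x).
rewrite -[X in X <= _]addr0; apply: lerD; last first.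
  apply: sumr_ge0 => z _; apply: mulr_ge0; [apply: trans_ge0|apply: trans_n_ge0]; by rewrite lexx ler01.
by apply: ler_pM => //; apply: exprn_ge0.
Qed.

End Basic.
Section CvgTools.
Variable R : realType.

Lemma cvg_sumr (T : Type) (F : set_system T) (FF : Filter F) (I : finType)
  (P : pred I) (f : I -> T -> R) (l : I -> R) :
  (forall i, f i x @[x --> F] --> l i) ->
  (\sum_(i | P i) f i x) @[x --> F] --> \sum_(i | P i) l i.
Proof.
move=> H.
exact: (cvg_big (@add_continuous R^o) FF (fun i _ => H i)).
Qed.

Lemma cvg_sumrP (T : Type) (F : set_system T) (FF : Filter F) (I : finType)
  (P : pred I) (f : I -> T -> R) (l : I -> R) :
  (forall i, P i -> f i x @[x --> F] --> l i) ->
  (\sum_(i | P i) f i x) @[x --> F] --> \sum_(i | P i) l i.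
Proof.
move=> H.
exact: (cvg_big (@add_continuous R^o) FF H).
Qed.

End CvgTools.

Section Absorb.
Variables (G : finType) (R : realType) (p : state G -> event G -> R).
Hypothesis Hp : replacement_rule p.
Hypothesis HG : (0 < #|G|)%N.
Hypothesis Hfix : fixation_axiom p.

Local Notation T := (trans_n p 0 0).
Local Notation A := (allA G).
Local Notation a := (alla G).

Lemma Aa_neq : A != a.
Proof.
case/card_gt0P: HG => g _; apply/eqP => /ffunP /(_ g); rewrite !ffunE.
by [].
Qed.

Lemma TA t y : T t A y = (y == A)%:R.
Proof. apply: trans_n0_abs => // e; exact: apply_allA. Qed.
Lemma Ta t y : T t a y = (y == a)%:R.
Proof. apply: trans_n0_abs => // e; exact: apply_alla. Qed.

Lemma T_ge0 t x y : 0 <= T t x y.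
Proof. apply: (trans_n_ge0 Hp); by rewrite lexx ler01. Qed.

Lemma T_nd_abs (c : state G) x : (forall e, apply_ev e c = c) ->
  nondecreasing_seq (fun t => T t x c).
Proof.
move=> Hc; apply/nondecreasing_seqP => t /=.
rewrite (bigD1 c) //= (trans0_abs Hp Hc) eqxx mulr1 lerDl.
apply: sumr_ge0 => z _; apply: mulr_ge0; first exact: T_ge0.
apply: (trans_ge0 Hp); by rewrite lexx ler01.
Qed.

Lemma T_cvg_abs (c : state G) x : (forall e, apply_ev e c = c) ->
  (fun t => T t x c) @ \oo --> absorb_prob p x c.
Proof.
move=> Hc; apply: nondecreasing_is_cvgn; first exact: T_nd_abs.
by exists 1 => _ [t _ <-]; apply: trans_n0_le1.
Qed.

Lemma hA_cvg x : (fun t => T t x A) @ \oo --> absorb_prob p x A.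
Proof. apply: T_cvg_abs => e; exact: apply_allA. Qed.
Lemma ha_cvg x : (fun t => T t x a) @ \oo --> absorb_prob p x a.
Proof. apply: T_cvg_abs => e; exact: apply_alla. Qed.

Lemma hA_ge x t : T t x A <= absorb_prob p x A.
Proof.
have Hnd : nondecreasing_seq (fun t => T t x A) by apply: T_nd_abs => e; exact: apply_allA.
exact: (nondecreasing_cvgn_le Hnd (cvgP _ (hA_cvg (x:=x))) t).
Qed.

Definition N t x := \sum_(y | (y != A) && (y != a)) T t x y.

Lemma N_eq t x : T t x A + T t x a + N t x = 1.
Proof.
rewrite -(trans_n0_sum Hp t x) (bigD1 A) //= (bigD1 a) /=; last by rewrite eq_sym Aa_neq.
by rewrite addrA; congr (_ + _); apply: eq_bigl => y; rewrite andbC.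
Qed.

Lemma N_ge0 t x : 0 <= N t x.
Proof. apply: sumr_ge0 => y _; exact: T_ge0. Qed.

Lemma N_shift t m x : N (t + m) x = \sum_z T t x z * N m z.
Proof.
rewrite /N; under eq_bigr do rewrite trans_nD.
rewrite exchange_big /=; apply: eq_bigr => z _; by rewrite big_distrr.
Qed.

End Absorb.
Lemma finite_min (R : realType) (X : eqType) (l : seq X) (f : X -> R) :
  (forall i, 0 < f i) -> exists2 d, 0 < d & forall i, i \in l -> d <= f i.
Proof.
move=> Hf; elim: l => [|i l [d d0 Hd]]; first by exists 1.
exists (Num.min (f i) d); first by rewrite lt_min Hf d0.
move=> j; rewrite in_cons => /orP[/eqP ->|/Hd Hj]; first by rewrite ge_min lexx.
by rewrite ge_min Hj orbT.
Qed.

Section Absorb2.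
Variables (G : finType) (R : realType) (p : state G -> event G -> R).
Hypothesis Hp : replacement_rule p.
Hypothesis HG : (0 < #|G|)%N.
Hypothesis Hfix : fixation_axiom p.

Local Notation T := (trans_n p 0 0).
Local Notation A := (allA G).
Local Notation a := (alla G).

Lemma delta_ex : exists m, exists2 dl : R, 0 < dl & forall z, N p m z <= 1 - dl.
Proof.
case: Hfix => g0 [s [s0 Hs _ Hfold]].
pose f := fun xe : state G * event G => if xe.2 \in s then p xe.1 xe.2 else 1.
have Hpos : forall xe, 0 < f xe.
  by move=> [x e]; rewrite /f /=; case: ifP => [/Hs ->|]//.
have [d d0 Hd] := @finite_min R _ (enum (predT : pred (state G * event G))) f Hpos.
have Hd' : forall x e, e \in s -> d <= p x e.
  move=> x e es; have := Hd (x, e); rewrite mem_enum /f /= es; exact.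
exists (size s), (d ^+ size s); first exact: exprn_gt0.
move=> z; have := N_eq Hp HG (size s) z.
have := run_ge Hp (ltW d0) Hd' z; rewrite runE.
have -> : [ffun h => z (foldr (@tilde G) h s)] = if z g0 then A else a.
  by apply/ffunP => h; rewrite ffunE Hfold; case: (z g0); rewrite !ffunE.
have := T_ge0 Hp (size s) z A; have := T_ge0 Hp (size s) z a.
case: (z g0) => h1 h2 h3 h4; lra.
Qed.

Lemma N_abs m : N p m A = 0 /\ N p m a = 0.
Proof.
split; apply: big1 => y /andP[h1 h2]; rewrite ?(TA Hp) ?(Ta Hp) //; by rewrite ?(negbTE h1) ?(negbTE h2).
Qed.

Lemma N_contract m dl t x : (forall z, N p m z <= 1 - dl) ->
  N p (t + m) x <= (1 - dl) * N p t x.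
Proof.
move=> Hm; rewrite N_shift (bigID (fun z => (z != A) && (z != a))) /=.
rewrite [X in _ + X]big1 ?addr0; last first.
  move=> z; rewrite negb_and !negbK => /orP[]/eqP->; by case: (N_abs m) => h1 h2; rewrite ?h1 ?h2 mulr0.
rewrite /N mulr_sumr; apply: ler_sum => z _; rewrite mulrC; apply: ler_wpM2r => //.
  exact: (T_ge0 Hp).
exact: Hm.
Qed.

Lemma absorb x : absorb_prob p x A + absorb_prob p x a = 1.
Proof.
have [m [dl dl0 Hm]] := delta_ex.
set L := 1 - absorb_prob p x A - absorb_prob p x a.
have HN : (fun t => N p t x) @ \oo --> L.
  have -> : (fun t => N p t x) = (fun t => 1 - T t x A - T t x a).
    apply/funext => t; have := N_eq Hp HG t x; lra.
  apply: cvgB; [apply: cvgB; [exact: cvg_cst|exact: (hA_cvg Hp)]|exact: (ha_cvg Hp)].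
have HN' : (fun t => N p (t + m) x) @ \oo --> L by move: HN; rewrite -(cvg_shiftn m); exact.
have L0 : 0 <= L.
  apply: (ler_cvg_to (cvg_cst 0) HN); apply: nearW => t; exact: N_ge0.
have L1 : L <= (1 - dl) * L.
  have HM : (fun t => (1 - dl) * N p t x) @ \oo --> (1 - dl) * L by apply: cvgMl_tmp.
  apply: (ler_cvg_to HN' HM); apply: nearW => t; exact: N_contract.
have : L = 0 by nra.
rewrite /L; lra.
Qed.

Lemma transient_cvg x y : y != A -> y != a -> (fun t => T t x y) @ \oo --> 0.
Proof.
move=> h1 h2.
have HN : (fun t => N p t x) @ \oo --> 1 - absorb_prob p x A - absorb_prob p x a.
  have -> : (fun t => N p t x) = (fun t => 1 - T t x A - T t x a).
    apply/funext => t; have := N_eq Hp HG t x; lra.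
  apply: cvgB; [apply: cvgB; [exact: cvg_cst|exact: (hA_cvg Hp)]|exact: (ha_cvg Hp)].
have E : 1 - absorb_prob p x A - absorb_prob p x a = 0 by have := absorb x; lra.
rewrite E in HN.
apply: (squeeze_cvgr _ (cvg_cst 0) HN); apply: nearW => t.
apply/andP; split; first exact: (T_ge0 Hp).
rewrite /N (bigD1 y) /=; last by rewrite h1 h2.
rewrite lerDl; apply: sumr_ge0 => z _; exact: (T_ge0 Hp).
Qed.

Lemma harmonic x :
  absorb_prob p x A = \sum_z trans p 0 0 x z * absorb_prob p z A.
Proof.
have H1 : (fun t => T (t + 1) x A) @ \oo --> absorb_prob p x A.
  by move: (@hA_cvg _ _ _ Hp x); rewrite -(cvg_shiftn 1); exact.
have H2 : (fun t => T (t + 1) x A) @ \oo --> \sum_z trans p 0 0 x z * absorb_prob p z A.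
  have -> : (fun t => T (t + 1) x A) = (fun t => \sum_z trans p 0 0 x z * T t z A).
    by apply/funext => t; rewrite addn1 trans_nSl.
  apply: cvg_sumr => z; apply: cvgMl_tmp; exact: (hA_cvg Hp).
exact: (cvg_unique _ H1 H2).
Qed.

Lemma hA_a : absorb_prob p a A = 0.
Proof.
have H : (fun t => T t a A) @ \oo --> 0.
  have -> : (fun t => T t a A) = (fun _ => 0).
    by apply/funext => t; rewrite (Ta Hp) (negbTE (Aa_neq HG)).
  exact: cvg_cst.
exact: (cvg_unique _ (hA_cvg Hp (x:=a)) H).
Qed.

Lemma hA_A : absorb_prob p A A = 1.
Proof.
have H : (fun t => T t A A) @ \oo --> (1:R).
  have -> : (fun t => T t A A) = (fun _ => 1) by apply/funext => t; rewrite (TA Hp) eqxx.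
  exact: cvg_cst.
exact: (cvg_unique _ (hA_cvg Hp (x:=A)) H).
Qed.

End Absorb2.
Section Lin1.
Variable R : realType.

Definition lin1 (f : R -> R) (L : R) :=
  exists Q : R -> R, (forall u, f u = f 0 + u * Q u) /\ Q u @[u --> 0^'+] --> L.

Lemma cvg_u0 : (fun u : R => u) @ 0^'+ --> (0:R).
Proof. apply: cvg_at_right_filter; exact: cvg_id. Qed.

Lemma lin1_cvg f L : lin1 f L -> f u @[u --> 0^'+] --> f 0.
Proof.
move=> [Q [HQ HL]]; move: HQ; move: (f 0) => c HQ.
have -> : f = fun u => c + u * Q u by apply/funext.
have H : (fun u => c + u * Q u) @ 0^'+ --> c + 0 * L.
  apply: cvgD; first exact: cvg_cst.
  apply: cvgM => //; exact: cvg_u0.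
by rewrite mul0r addr0 in H.
Qed.

Lemma lin1_eqL f L L' : lin1 f L -> L = L' -> lin1 f L'.
Proof. by move=> H <-. Qed.

Lemma lin1_eqf f g L : lin1 f L -> (forall u, f u = g u) -> lin1 g L.
Proof. by move=> H /funext <-. Qed.

Lemma lin1_cst c : lin1 (fun _ => c) 0.
Proof. exists (fun _ => 0); split; [by move=> u; rewrite mulr0 addr0|exact: cvg_cst]. Qed.

Lemma lin1_aff al be : lin1 (fun u => al + u * be) be.
Proof. exists (fun _ => be); split; [by move=> u; rewrite mul0r addr0|exact: cvg_cst]. Qed.

Lemma lin1_add f g Lf Lg : lin1 f Lf -> lin1 g Lg -> lin1 (fun u => f u + g u) (Lf + Lg).
Proof.
move=> [Qf [Hf Cf]] [Qg [Hg Cg]]; exists (fun u => Qf u + Qg u); split.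
  by move=> u; rewrite (Hf u) (Hg u); ring.
exact: cvgD.
Qed.

Lemma lin1_mul f g Lf Lg : lin1 f Lf -> lin1 g Lg ->
  lin1 (fun u => f u * g u) (Lf * g 0 + f 0 * Lg).
Proof.
move=> hf hg; have Cg := lin1_cvg hg.
move: hf hg => [Qf [Hf Cf]] [Qg [Hg Cg']].
exists (fun u => Qf u * g u + f 0 * Qg u); split.
  move=> u; rewrite (Hf u) (Hg u); ring.
apply: cvgD; [exact: cvgM|exact: cvgMl_tmp].
Qed.

Lemma lin1_sum (I : finType) (P : pred I) (f : I -> R -> R) (L : I -> R) :
  (forall i, lin1 (f i) (L i)) ->
  lin1 (fun u => \sum_(i | P i) f i u) (\sum_(i | P i) L i).
Proof.
move=> H.
have [Q HQ] : exists Q : I -> R -> R, forall i, (forall u, f i u = f i 0 + u * Q i u) /\ Q i u @[u --> 0^'+] --> L i.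
  exists (fun i => xget (fun=> 0) (fun Q => (forall u, f i u = f i 0 + u * Q u) /\ Q u @[u --> 0^'+] --> L i)).
  move=> i; case: xgetP => //= H'; exfalso; case: (H i) => Q HQ'; exact: (H' Q).
exists (fun u => \sum_(i | P i) Q i u); split.
  move=> u; rewrite mulr_sumr -big_split /=; apply: eq_bigr => i _; by case: (HQ i).
apply: cvg_sumr => i; by case: (HQ i).
Qed.

Lemma lin1_prod (I : eqType) (s : seq I) (f : I -> R -> R) (L : I -> R) :
  uniq s -> (forall i, lin1 (f i) (L i)) ->
  lin1 (fun u => \prod_(i <- s) f i u)
       (\sum_(k <- s) L k * \prod_(j <- s | j != k) f j 0).
Proof.
move=> + H; elim: s => [|i s IH] /=.
  move=> _; apply: (lin1_eqf (f := fun _ => 1)); first by apply: lin1_eqL (lin1_cst 1) _; rewrite big_nil.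
  by move=> u; rewrite big_nil.
move=> /andP[Hi Hs].
have := lin1_mul (H i) (IH Hs).
move/lin1_eqf => /(_ (fun u => \prod_(j <- i :: s) f j u)) H1.
apply: lin1_eqL; first by apply: H1 => u; rewrite big_cons.
rewrite big_cons big_cons eqxx /=.
have -> : \prod_(j <- s | j != i) f j 0 = \prod_(j <- s) f j 0.
  rewrite big_seq_cond [RHS]big_seq; apply: eq_bigl => j.
  case: (boolP (j \in s)) => //= js; apply/eqP => ji; by rewrite -ji js in Hi.
congr (_ + _); rewrite big_distrr /= [RHS]big_seq [LHS]big_seq; apply: eq_bigr => k ks.
rewrite big_cons; have -> : (i != k) by apply/eqP => ik; rewrite ik ks in Hi.
by rewrite mulrCA.
Qed.

End Lin1.
Section Pert.
Variables (G : finType) (R : realType) (p : state G -> event G -> R) (nu : R).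

Definition al (e : event G) x g bv := site_prob (0:R) nu e x g bv.
Definition be (e : event G) x g bv := site_prob (1:R) nu e x g bv - site_prob (0:R) nu e x g bv.

Lemma site_aff u e x g bv : site_prob u nu e x g bv = al e x g bv + u * be e x g bv.
Proof. rewrite /al /be /site_prob; case: (e g) => [h|]; last by rewrite subrr mulr0 addr0. by case: bv; ring. Qed.

Definition Dt (x y : state G) := \sum_e p x e * \sum_(k : G) be e x k (y k) * \prod_(j | j != k) al e x j (y j).

Lemma lin1_trans x y : lin1 (fun u => trans p u nu x y) (Dt x y).
Proof.
apply: lin1_sum => e.
have Hpr := @lin1_prod R G (index_enum G) (fun k u => site_prob u nu e x k (y k))
  (fun k => be e x k (y k)) (index_enum_uniq G)
  (fun k => lin1_eqf (lin1_aff _ _) (fun u => esym (site_aff u e x k (y k)))).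
apply: lin1_eqL; first exact: lin1_mul (lin1_cst (p x e)) Hpr.
by rewrite mul0r add0r.
Qed.

Lemma lin1_transh x (h : state G -> R) :
  lin1 (fun u => \sum_y trans p u nu x y * h y) (\sum_y Dt x y * h y).
Proof.
apply: (@lin1_sum R (state G) predT (fun y u => trans p u nu x y * h y) (fun y => Dt x y * h y)) => y.
apply: lin1_eqL; first exact: lin1_mul (lin1_trans x y) (lin1_cst (h y)).
by rewrite mulr0 addr0.
Qed.

Lemma trans_n_cvg t x y :
  (fun u => trans_n p u nu t x y) @ 0^'+ --> trans_n p 0 nu t x y.
Proof.
elim: t y => [|t IH] y /=; first exact: cvg_cst.
apply: cvg_sumr => z; apply: cvgM; first exact: IH.
exact: (lin1_cvg (lin1_trans z y)).
Qed.

End Pert.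
Section Explicit.
Variables (G : finType) (R : realType) (p : state G -> event G -> R) (nu : R).

Definition flip (c : state G) (k : G) : state G := [ffun j => if j == k then ~~ c k else c j].

Lemma death_E x k : death p x k = \sum_e p x e * (e k != None)%:R.
Proof.
rewrite /death /edge; under eq_bigr do rewrite big_mkcond.
rewrite exchange_big; apply: eq_bigr => e _ /=.
case: (e k) => [h'|] /=.
  rewrite (bigD1 h') //= eqxx mulr1 big1 ?addr0 // => h /negbTE Hh.
  by case: eqP => // [[]] E; rewrite E eqxx in Hh.
by rewrite mulr0 big1.
Qed.

Lemma prod_off (y c : state G) k :
  \prod_(j | j != k) ((y j == c j)%:R : R) = ((y == c) || (y == flip c k))%:R.
Proof.
case: (boolP ((y == c) || (y == flip c k))) => H.
  apply: big1 => j jk; case/orP: H => /eqP ->; first by rewrite eqxx.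
  by rewrite ffunE (negbTE jk) eqxx.
have [j jk Hj] : exists2 j, j != k & y j != c j.
  apply/exists_inP; apply: contraR H => /exists_inPn Hn.
  case: (boolP (y k == c k)) => Hk.
    apply/orP; left; apply/eqP/ffunP => j; case: (eqVneq j k) => [->|jk]; first exact/eqP.
    by move: (Hn j jk); rewrite negbK => /eqP.
  apply/orP; right; apply/eqP/ffunP => j; rewrite ffunE; case: (eqVneq j k) => [->|jk].
    by move: Hk; case: (y k); case: (c k).
  by move: (Hn j jk); rewrite negbK => /eqP.
by rewrite (bigD1 j) //= (negbTE Hj) mul0r.
Qed.

Lemma flip_neq (c : state G) k : c != flip c k.
Proof. apply/eqP => /ffunP /(_ k); rewrite ffunE eqxx; by case: (c k). Qed.

Lemma sum_off (F : state G -> R) (c : state G) k :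
  \sum_y F y * \prod_(j | j != k) ((y j == c j)%:R : R) = F c + F (flip c k).
Proof.
under eq_bigr do rewrite prod_off.
rewrite (bigD1 c) //= eqxx mulr1 (bigD1 (flip c k)) /=; last by rewrite eq_sym flip_neq.
rewrite eqxx orbT mulr1 big1 ?addr0 // => y /andP[/negbTE h1 /negbTE h2].
by rewrite h1 h2 mulr0.
Qed.

Lemma Dt_const (c : state G) (h : state G -> R) : (forall e, apply_ev e c = c) ->
  \sum_y Dt p nu c y * h y =
  \sum_e p c e * \sum_k (be nu e c k (c k) * h c + be nu e c k (~~ c k) * h (flip c k)).
Proof.
move=> Hc; rewrite /Dt.
under eq_bigr do rewrite mulr_suml.
rewrite exchange_big; apply: eq_bigr => e _ /=.
under eq_bigr => y _ do rewrite -mulrA mulr_suml.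
rewrite -mulr_sumr; congr (_ * _).
rewrite exchange_big; apply: eq_bigr => k _ /=.
transitivity (\sum_(y : state G) (be nu e c k (y k) * h y) * \prod_(j | j != k) ((y j == c j)%:R : R)).
  apply: eq_bigr => y _; rewrite mulrAC; congr (_ * _); apply: eq_bigr => j _.
  by rewrite /al site_prob0 Hc.
by rewrite sum_off ffunE eqxx.
Qed.

Lemma be_A e k bv : be nu e (allA G) k bv = (e k != None)%:R * (if bv then nu - 1 else 1 - nu).
Proof.
rewrite /be /site_prob; case: (e k) => [h|] /=; last by rewrite subrr mul0r.
rewrite ffunE mul1r; case: bv => /=; ring.
Qed.

Lemma be_a e k bv : be nu e (alla G) k bv = (e k != None)%:R * (if bv then nu else - nu).
Proof.
rewrite /be /site_prob; case: (e k) => [h|] /=; last by rewrite subrr mul0r.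
rewrite ffunE mul1r; case: bv => /=; ring.
Qed.

Lemma DtA (h : state G -> R) :
  \sum_y Dt p nu (allA G) y * h y =
  (1 - nu) * \sum_k death p (allA G) k * (h (flip (allA G) k) - h (allA G)).
Proof.
rewrite Dt_const; last exact: apply_allA.
transitivity (\sum_e \sum_k (1 - nu) * (p (allA G) e * (e k != None)%:R) * (h (flip (allA G) k) - h (allA G))).
  apply: eq_bigr => e _; rewrite mulr_sumr; apply: eq_bigr => k _; rewrite !be_A ffunE /=; ring.
rewrite exchange_big mulr_sumr; apply: eq_bigr => k _ /=.
rewrite death_E mulr_suml mulr_sumr; apply: eq_bigr => e _; ring.
Qed.

Lemma Dta (h : state G -> R) :
  \sum_y Dt p nu (alla G) y * h y =
  nu * \sum_k death p (alla G) k * (h (flip (alla G) k) - h (alla G)).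
Proof.
rewrite Dt_const; last exact: apply_alla.
transitivity (\sum_e \sum_k nu * (p (alla G) e * (e k != None)%:R) * (h (flip (alla G) k) - h (alla G))).
  apply: eq_bigr => e _; rewrite mulr_sumr; apply: eq_bigr => k _; rewrite !be_a ffunE /=; ring.
rewrite exchange_big mulr_sumr; apply: eq_bigr => k _ /=.
rewrite death_E mulr_suml mulr_sumr; apply: eq_bigr => e _; ring.
Qed.

Lemma flipA k : flip (allA G) k = ind [set~ k].
Proof. by apply/ffunP => j; rewrite !ffunE !inE; case: eqP. Qed.
Lemma flipa k : flip (alla G) k = ind [set k].
Proof. by apply/ffunP => j; rewrite !ffunE !inE; case: eqP. Qed.

End Explicit.
Section Main.
Variables (G : finType) (R : realType) (p : state G -> event G -> R) (nu : R)
  (pi : R -> state G -> R).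
Hypothesis HG : (0 < #|G|)%N.
Hypothesis Hp : replacement_rule p.
Hypothesis Hfix : fixation_axiom p.
Hypothesis Hnu : 0 < nu < 1.
Hypothesis Hpi : forall u, 0 < u <= 1 -> stationary (trans p u nu) (pi u).

Local Notation A := (allA G).
Local Notation a := (alla G).

Lemma nu01 : 0 <= nu <= 1.
Proof. by case/andP: Hnu => h1 h2; rewrite ltW // ltW. Qed.

Lemma pi_ge0 u x : 0 < u <= 1 -> 0 <= pi u x.
Proof. by move=> /Hpi []. Qed.

Lemma pi_le1 u x : 0 < u <= 1 -> pi u x <= 1.
Proof.
move=> hu; case: (Hpi hu) => H0 H1 _; rewrite -H1 (bigD1 x) //= lerDl.
by apply: sumr_ge0 => y _; exact: H0.
Qed.

Lemma pi_t u t y : 0 < u <= 1 -> \sum_x pi u x * trans_n p u nu t x y = pi u y.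
Proof.
move=> hu; case: (Hpi hu) => _ _ Hs; elim: t y => [|t IH] y /=.
  rewrite (bigD1 y) //= eqxx mulr1 big1 ?addr0 // => x /negbTE ->; by rewrite mulr0.
under eq_bigr do rewrite mulr_sumr.
rewrite exchange_big /= -[RHS]Hs; apply: eq_bigr => z _.
by rewrite -IH mulr_suml; apply: eq_bigr => x _; rewrite mulrA.
Qed.

Lemma u01 (u : R) : 0 < u <= 1 -> 0 <= u <= 1.
Proof. by case/andP => h1 h2; rewrite ltW. Qed.

Lemma pi_transient y : y != A -> y != a -> (fun u => pi u y) @ 0^'+ --> 0.
Proof.
move=> h1 h2; apply/cvgrPdist_lt => e e0.
have Hs0 : (fun t => \sum_x trans_n p 0 nu t x y) @ \oo --> \sum_(x : state G) (0:R).
  apply: cvg_sumr => x; under eq_cvg do rewrite trans_n0_nu.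
  exact: transient_cvg.
have Hs : (fun t => \sum_x trans_n p 0 nu t x y) @ \oo --> 0.
  by rewrite big1 in Hs0.
have [t Ht] := filter_ex (cvgr_lt _ Hs _ e0).
have Hu : (fun u => \sum_x trans_n p u nu t x y) @ 0^'+ --> \sum_x trans_n p 0 nu t x y.
  apply: cvg_sumr => x; exact: trans_n_cvg.
near=> u.
have hu : 0 < u <= 1.
  apply/andP; split; [near: u; exact: nbhs_right_gt|near: u; exact: nbhs_right_ltW].
rewrite sub0r normrN ger0_norm; last exact: pi_ge0.
rewrite -(pi_t t y hu); apply: le_lt_trans (_ : _ <= \sum_x trans_n p u nu t x y) _.
  apply: ler_sum => x _; rewrite -[X in _ <= X]mul1r; apply: ler_wpM2r.
    apply: (trans_n_ge0 Hp); [exact: u01|exact: nu01].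
  exact: pi_le1.
near: u; exact: (cvgr_lt _ Hu _ Ht).
Unshelve. all: by end_near.
Qed.


Definition hA x := absorb_prob p x A.
Definition ha x := absorb_prob p x a.

Lemma Qfam : exists Q : state G -> R -> R, forall x,
  (forall u, \sum_y trans p u nu x y * hA y = hA x + u * Q x u) /\
  Q x u @[u --> 0^'+] --> \sum_y Dt p nu x y * hA y.
Proof.
pose P x (Q : R -> R) := (forall u, \sum_y trans p u nu x y * hA y = hA x + u * Q u) /\
  Q u @[u --> 0^'+] --> \sum_y Dt p nu x y * hA y.
exists (fun x => xget (fun=> 0) (P x)) => x.
case: xgetP => //= H'; exfalso.
have [Q [HQ1 HQ2]] := lin1_transh p nu x hA.
apply: (H' Q); split => // u; rewrite HQ1; congr (_ + _).
rewrite /hA (harmonic Hp x); apply: eq_bigr => z _; by rewrite trans0_nu.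
Qed.

Lemma piQ (Q : state G -> R -> R) u :
  (forall x u, \sum_y trans p u nu x y * hA y = hA x + u * Q x u) ->
  0 < u <= 1 -> \sum_x pi u x * Q x u = 0.
Proof.
move=> HQ hu; case: (Hpi hu) => _ _ Hs.
have E : \sum_x pi u x * (\sum_y trans p u nu x y * hA y) = \sum_y pi u y * hA y.
  under eq_bigr do rewrite mulr_sumr.
  rewrite exchange_big /=; apply: eq_bigr => y _.
  by rewrite -Hs mulr_suml; apply: eq_bigr => x _; rewrite mulrA.
have E' : \sum_x (pi u x * hA x + pi u x * (u * Q x u)) = \sum_y pi u y * hA y.
  by rewrite -E; apply: eq_bigr => x _; rewrite HQ mulrDr.
rewrite big_split /= -[RHS]addr0 in E'; move/addrI: E' => E'.
have u0 : u != 0 by case/andP: hu => h _; rewrite gt_eqF.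
have : u * \sum_x pi u x * Q x u = 0.
  rewrite -[RHS]E' mulr_sumr; apply: eq_bigr => x _; by rewrite mulrCA.
by move/eqP; rewrite mulf_eq0 (negbTE u0) /= => /eqP.
Qed.


Lemma btot_E x : btot p x = \sum_k death p x k.
Proof. by rewrite /btot /birth /death exchange_big. Qed.

Lemma death_ge0 x k : 0 <= death p x k.
Proof.
rewrite death_E; apply: sumr_ge0 => e _; apply: mulr_ge0; [exact: p_ge0|exact: ler0n].
Qed.

Lemma hA_ge0 x : 0 <= hA x.
Proof. apply: le_trans (hA_ge Hp x 0); exact: (T_ge0 Hp). Qed.

Lemma ha_ge0 x : 0 <= ha x.
Proof.
have Hnd : nondecreasing_seq (fun t => trans_n p 0 0 t x a).
  by apply: (T_nd_abs Hp) => e; exact: apply_alla.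
apply: le_trans (nondecreasing_cvgn_le Hnd (cvgP _ (ha_cvg Hp (x:=x))) 0).
exact: (T_ge0 Hp).
Qed.

Lemma pos_facts : exists g0, 0 < hA (ind [set g0]) /\ forall x, 0 < death p x g0.
Proof.
case: Hfix => g0 [s [s0 Hs [e es ge] Hfold]]; exists g0; split.
  pose f := fun xe : state G * event G => if xe.2 \in s then p xe.1 xe.2 else 1.
  have Hpos : forall xe, 0 < f xe.
    by move=> [x e']; rewrite /f /=; case: ifP => [/Hs ->|]//.
  have [d d0 Hd] := @finite_min R _ (enum (predT : pred (state G * event G))) f Hpos.
  have Hd' : forall x e, e \in s -> d <= p x e.
    move=> x e' es'; have := Hd (x, e'); rewrite mem_enum /f /= es'; exact.
  have := run_ge Hp (ltW d0) Hd' (ind [set g0]); rewrite runE.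
  have -> : [ffun h => ind [set g0] (foldr (@tilde G) h s)] = A.
    by apply/ffunP => h; rewrite !ffunE Hfold inE eqxx.
  move=> H; apply: lt_le_trans (hA_ge Hp _ (size s)); apply: lt_le_trans H.
  exact: exprn_gt0.
move=> x; rewrite death_E (bigD1 e) //=.
have -> : (e g0 != None) by move: ge; rewrite inE.
rewrite mulr1; apply: ltr_pwDl; first exact: Hs.
apply: sumr_ge0 => e' _; apply: mulr_ge0; [exact: p_ge0|exact: ler0n].
Qed.

Lemma btot_pos x : 0 < btot p x.
Proof.
have [g0 [_ Hd]] := pos_facts.
rewrite btot_E (bigD1 g0) //=; apply: ltr_pwDl; first exact: Hd.
apply: sumr_ge0 => k _; exact: death_ge0.
Qed.

Lemma btot_rhoA : btot p a * rhoA p = \sum_g death p a g * hA (ind [set g]).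
Proof.
have b0 : btot p a != 0 by rewrite gt_eqF // btot_pos.
rewrite /rhoA mulr_sumr; apply: eq_bigr => g _.
by rewrite mulrA mulrCA divff // mulr1.
Qed.

Lemma btot_rhoa : btot p A * rhoa p = \sum_g death p A g * ha (ind [set~ g]).
Proof.
have b0 : btot p A != 0 by rewrite gt_eqF // btot_pos.
rewrite /rhoa mulr_sumr; apply: eq_bigr => g _.
by rewrite mulrA mulrCA divff // mulr1.
Qed.

Lemma cA_pos : 0 < nu * btot p a * rhoA p.
Proof.
case/andP: Hnu => n0 _; rewrite -mulrA; apply: mulr_gt0 => //.
rewrite btot_rhoA; have [g0 [H1 H2]] := pos_facts.
rewrite (bigD1 g0) //=; apply: ltr_pwDl; first exact: mulr_gt0.
apply: sumr_ge0 => k _; apply: mulr_ge0; [exact: death_ge0|exact: hA_ge0].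
Qed.

Lemma ca_ge0 : 0 <= (1 - nu) * btot p A * rhoa p.
Proof.
case/andP: Hnu => _ n1; rewrite -mulrA; apply: mulr_ge0; first by rewrite subr_ge0 ltW.
rewrite btot_rhoa; apply: sumr_ge0 => k _; apply: mulr_ge0; [exact: death_ge0|exact: ha_ge0].
Qed.

Lemma LA_val : \sum_y Dt p nu A y * hA y = - ((1 - nu) * btot p A * rhoa p).
Proof.
rewrite DtA -mulrA btot_rhoa -mulrN -sumrN; congr (_ * _); apply: eq_bigr => k _.
rewrite flipA /hA (hA_A Hp) -mulrN; congr (_ * _).
have := absorb Hp HG Hfix (ind [set~ k]); rewrite /ha; lra.
Qed.

Lemma La_val : \sum_y Dt p nu a y * hA y = nu * btot p a * rhoA p.
Proof.
rewrite Dta -mulrA btot_rhoA; congr (_ * _); apply: eq_bigr => k _.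
by rewrite flipa /hA (hA_a Hp HG) subr0.
Qed.


Lemma near01 : \forall u \near (0:R)^'+, 0 < u <= 1.
Proof.
near=> u; apply/andP; split; [near: u; exact: nbhs_right_gt|near: u; exact: nbhs_right_ltW].
Unshelve. all: by end_near.
Qed.

Lemma main_lim x : (fun u => pi u x) @ 0^'+ --> limit_value p nu x.
Proof.
have h1 := cA_pos; have h2 := ca_ge0.
set cA := nu * btot p a * rhoA p in h1 *.
set ca := (1 - nu) * btot p A * rhoa p in h2 *.
have D0 : 0 < cA + ca by lra.
have [Q HQ] := Qfam.
have HQA : Q A u @[u --> 0^'+] --> - ca by rewrite /ca -LA_val; case: (HQ A).
have HQa : Q a u @[u --> 0^'+] --> cA by rewrite /cA -La_val; case: (HQ a).
pose nabs := fun y : state G => (y != A) && (y != a).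
pose tau := fun u => \sum_(y | nabs y) pi u y.
pose rho := fun u => \sum_(y | nabs y) pi u y * Q y u.
have Htau : tau u @[u --> 0^'+] --> 0.
  have H : tau u @[u --> 0^'+] --> \sum_(y | nabs y) (0:R).
    apply: cvg_sumrP => y /andP[h3 h4]; exact: pi_transient.
  by rewrite big1 in H.
have Hrho : rho u @[u --> 0^'+] --> 0.
  have H : rho u @[u --> 0^'+] --> \sum_(y | nabs y) (0 * \sum_z Dt p nu y z * hA z).
    apply: cvg_sumrP => y /andP[h3 h4]; apply: cvgM; first exact: pi_transient.
    by case: (HQ y).
  by rewrite big1 in H => // y _; rewrite mul0r.
have Eq1 : \forall u \near 0^'+, pi u A + pi u a + tau u = 1.
  near=> u; have hu : 0 < u <= 1 by near: u; exact: near01.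
  case: (Hpi hu) => _ H1 _; rewrite -H1 (bigD1 A) //= (bigD1 a) /=; last by rewrite eq_sym (Aa_neq HG).
  by rewrite addrA; congr (_ + _); apply: eq_bigl => y; rewrite andbC.
have Eq2 : \forall u \near 0^'+, pi u A * Q A u + pi u a * Q a u + rho u = 0.
  near=> u; have hu : 0 < u <= 1 by near: u; exact: near01.
  rewrite -(piQ (fun x u => proj1 (HQ x) u) hu) (bigD1 A) //= (bigD1 a) /=; last by rewrite eq_sym (Aa_neq HG).
  by rewrite addrA; congr (_ + _); apply: eq_bigl => y; rewrite andbC.
have Hden : (fun u => Q A u - Q a u) @ 0^'+ --> - ca - cA by apply: cvgB.
have Hden0 : \forall u \near 0^'+, Q A u - Q a u != 0.
  apply: (cvgr_neq0 _ Hden); rewrite -opprD oppr_eq0; lra.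
pose W := fun u => (- Q a u + tau u * Q a u - rho u) / (Q A u - Q a u).
have HW : W u @[u --> 0^'+] --> (- cA + 0 * cA - 0) / (- ca - cA).
  apply: cvgM; last by apply: cvgV; [rewrite -opprD oppr_eq0; lra|exact: Hden].
  apply: cvgB => //; apply: cvgD; [exact: cvgN|exact: cvgM].
have HA : (fun u => pi u A) @ 0^'+ --> cA / (cA + ca).
  have -> : cA / (cA + ca) = (- cA + 0 * cA - 0) / (- ca - cA).
    have n1 : cA + ca != 0 by rewrite gt_eqF.
    have n2 : - ca - cA != 0 by rewrite -opprD addrC oppr_eq0.
    by rewrite mul0r addr0 subr0; field; rewrite n1 n2.
  apply: (cvg_trans _ HW); apply: near_eq_cvg; near=> u.
  have e1 : pi u A + pi u a + tau u = 1 by apply: (near Eq1 u).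
  have e2 : pi u A * Q A u + pi u a * Q a u + rho u = 0 by apply: (near Eq2 u).
  have d0 : Q A u - Q a u != 0 by apply: (near Hden0 u).
  rewrite /W -[RHS](mulfK d0); congr (_ / _).
  have e3 : rho u = - (pi u A * Q A u + pi u a * Q a u) by lra.
  have e4 : pi u a = 1 - pi u A - tau u by lra.
  rewrite e3 e4; ring.
have Ha : (fun u => pi u a) @ 0^'+ --> ca / (cA + ca).
  have -> : ca / (cA + ca) = 1 - cA / (cA + ca) - 0.
    have n1 : cA + ca != 0 by rewrite gt_eqF.
    by rewrite subr0; field.
  have H : (fun u => 1 - pi u A - tau u) @ 0^'+ --> 1 - cA / (cA + ca) - 0.
    apply: cvgB => //; apply: cvgB => //; exact: cvg_cst.
  apply: (cvg_trans _ H); apply: near_eq_cvg; near=> u.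
  have e1 : pi u A + pi u a + tau u = 1 by apply: (near Eq1 u).
  lra.
rewrite /limit_value -/cA -/ca.
case: (eqVneq x A) => [->|xA]; first exact: HA.
case: (eqVneq x a) => [->|xa]; first exact: Ha.
apply: pi_transient => //.
Unshelve. all: by end_near.
Qed.
End Main.

Unset Implicit Arguments.

Theorem theorem1 (G : finType) (R : realType)
  (p : state G -> event G -> R) (nu : R)
  (pi : R -> state G -> R) :
  (0 < #|G|)%N ->
  replacement_rule p ->
  fixation_axiom p ->
  0 < nu < 1 ->
  (forall u, 0 < u <= 1 -> stationary (trans p u nu) (pi u)) ->
  forall x : state G,
    (fun u => pi u x) @ 0^'+ --> limit_value p nu x.
Proof.
move=> HG Hp Hfix Hnu Hpi x.
exact: (@main_lim G R p nu pi HG Hp Hfix Hnu Hpi x).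
Qed.
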